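(* In an unweighted instance, for every facility placement profile $\mathbf{s}$, every rounded client profile $\sigma(\mathbf{s})$ for $\mathbf{s}$ is a client equilibrium.
   Context: Setting: a finite directed graph $H=(V,E)$ whose vertices are clients, all of weight $w(v)=1$ (unweighted); a finite set $F$ of facility agents; a facility placement profile $\mathbf{s}=(s_f)_{f\in F}$ with $s_f\in V$. Let $N(v)=\{v\}\cup\{u:(v,u)\in E\}$, $N_{\mathbf{s}}(v)=\{f\in F:s_f\in N(v)\}$, $A_{\mathbf{s}}(f)=\{v: f\in N_{\mathbf{s}}(v)\}$, $A_{\mathbf{s}}(T)=\bigcup_{f\in T}A_{\mathbf{s}}(f)$, $w(X)=|X|$. A client profile $\sigma(\mathbf{s})$ assigns to each client $v$ numbers $\sigma(\mathbf{s})_{v,f}\in[0,1]$ with $\sigma(\mathbf{s})_{v,f}=0$ for $f\notin N_{\mathbf{s}}(v)$ and $\sum_f\sigma(\mathbf{s})_{v,f}=1$ whenever $N_{\mathbf{s}}(v)\neq\varnothing$. Load $\ell_f=\sum_v\sigma(\mathbf{s})_{v,f}w(v)$; client cost $L_v=w(v)+\sum_{f\in N_{\mathbf{s}}(v)}\sigma(\mathbf{s})_{v,f}\ell_{-v,f}$ with $\ell_{-v,f}=\sum_{u\neq v}\sigma(\mathbf{s})_{u,f}w(u)$. $\sigma(\mathbf{s})$ is a client equilibrium if no client can strictly decrease her cost by unilaterally changing her own distribution. Minimum neighborhood set: for nonempty $F^*\subseteq F$, $V^*\subseteq V$, $\mathrm{MNS}_{\mathbf{s}}(F^*,V^* )$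 is the largest-cardinality subset among the nonempty $T\subseteq F^*$ minimizing $w(A_{\mathbf{s}}(T)\cap V^* )/|T|$. Class set: inductively, while facilities remain, $F_i=\mathrm{MNS}_{\mathbf{s}}(F\setminus\bigcup_{j<i}F_j, V\setminus\bigcup_{j<i}V_j)$, $V_i=A_{\mathbf{s}}(F_i)\setminus\bigcup_{j<i}V_j$, $C_i=(F_i,V_i)$, $\ell(C_i)=w(V_i)/|F_i|$. A client profile $\sigma(\mathbf{s})$ is rounded if for every class $C_i$ and every $f\in F_i$ we have $\ell_f\in\{\lfloor\ell(C_i)\rfloor,\lceil\ell(C_i)\rceil\}$, and for every class $C_i$ and every client $v\in V_i$ there is exactly one $g\in F_i$ with $\sigma(\mathbf{s})_{v,g}=1$. *)

(* Defs.v *)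
From HB Require Import structures.
From mathcomp Require Import all_boot all_order all_algebra.
Set Implicit Arguments. Unset Strict Implicit. Unset Printing Implicit Defensive.
Import Order.TTheory GRing.Theory Num.Theory.
Local Open Scope ring_scope.

Section FLG.
Variables (R : realFieldType) (V F : finType) (E : rel V).

Definition nbhd (v : V) : {set V} := [set u | (u == v) || E v u].

Definition Ns (s : F -> V) (v : V) : {set F} := [set f | s f \in nbhd v].

Definition As (s : F -> V) (f : F) : {set V} := [set v | f \in Ns s v].

Definition AsT (s : F -> V) (T : {set F}) : {set V} := \bigcup_(f in T) As s f.

Definition valid_dist (s : F -> V) (v : V) (d : F -> R) : Prop :=
  (forall f, 0 <= d f <= 1) /\
  (forall f, f \notin Ns s v -> d f = 0) /\
  (Ns s v != set0 -> \sum_f d f = 1).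

Definition client_profile (s : F -> V) (sigma : V -> F -> R) : Prop :=
  forall v, valid_dist s v (sigma v).

(* unweighted: w(v) = 1 *)
Definition load (sigma : V -> F -> R) (f : F) : R := \sum_v sigma v f.

Definition load_minus (sigma : V -> F -> R) (v : V) (f : F) : R :=
  \sum_(u | u != v) sigma u f.

Definition cost (s : F -> V) (sigma : V -> F -> R) (v : V) : R :=
  1 + \sum_(f in Ns s v) sigma v f * load_minus sigma v f.

Definition deviate (sigma : V -> F -> R) (v : V) (d : F -> R) : V -> F -> R :=
  fun u => if u == v then d else sigma u.

Definition client_equilibrium (s : F -> V) (sigma : V -> F -> R) : Prop :=
  forall v (d : F -> R), valid_dist s v d ->
    ~ (cost s (deviate sigma v d) v < cost s sigma v).

(* Minimum neighbourhood set: ratio w(A(T) cap Vs) / card T compared by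
   cross-multiplication *)
Definition ratio_le (s : F -> V) (Vs : {set V}) (T U : {set F}) : bool :=
  (#|AsT s T :&: Vs| * #|U| <= #|AsT s U :&: Vs| * #|T|)%N.

Definition is_MNS (s : F -> V) (Fs : {set F}) (Vs : {set V}) (T : {set F}) : bool :=
  [&& T \subset Fs, T != set0 &
   [forall U : {set F}, (U \subset Fs) && (U != set0) ==>
      ratio_le s Vs T U &&
      (ratio_le s Vs U T ==> (#|U| <= #|T|)%N)]].

(* the (unique) MNS; set0 only when Fs is empty *)
Definition MNS (s : F -> V) (Fs : {set F}) (Vs : {set V}) : {set F} :=
  odflt set0 [pick T | is_MNS s Fs Vs T].

(* class set C_1, C_2, ...: each step removes >= 1 facility, so fuel #|F|
   suffices *)
Fixpoint classes_aux (s : F -> V) (n : nat) (Fr : {set F}) (Vr : {set V})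
  : seq ({set F} * {set V}) :=
  match n with
  | 0 => [::]
  | n'.+1 =>
    if Fr == set0 then [::] else
    let Fi := MNS s Fr Vr in
    let Vi := AsT s Fi :&: Vr in
    (Fi, Vi) :: classes_aux s n' (Fr :\: Fi) (Vr :\: Vi)
  end.

Definition class_set (s : F -> V) : seq ({set F} * {set V}) :=
  classes_aux s #|F| [set: F] [set: V].

(* floor and ceiling of l(C_i) = |V_i|/|F_i| *)
Definition class_floor (C : {set F} * {set V}) : nat := (#|C.2| %/ #|C.1|)%N.
Definition class_ceil (C : {set F} * {set V}) : nat :=
  (#|C.2| %/ #|C.1| + ~~ (#|C.1| %| #|C.2|))%N.

Definition rounded (s : F -> V) (sigma : V -> F -> R) : Prop :=
  forall C, C \in class_set s ->
    (forall f, f \in C.1 ->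
       load sigma f = (class_floor C)%:R \/ load sigma f = (class_ceil C)%:R) /\
    (forall v, v \in C.2 -> exists! g, g \in C.1 /\ sigma v g = 1).

End FLG.

(* Main.v *)
Require Import Defs.
From HB Require Import structures.
From mathcomp Require Import all_boot all_order all_algebra.
From mathcomp Require Import zify.
Import Order.TTheory GRing.Theory Num.Theory.
Set Implicit Arguments. Unset Strict Implicit. Unset Printing Implicit Defensive.

Lemma exists_min (X : finType) (P : pred X) (le : rel X) :
  (forall x, le x x) -> (forall x y, le x y || le y x) ->
  (forall x y z, P x -> P y -> P z -> le x y -> le y z -> le x z) ->
  forall x0, P x0 -> exists x, P x && [forall y, P y ==> le x y].
Proof.
move=> refl tot tr x0 Px0.
suff: forall sq : seq X, all P sq -> sq != [::] -> exists2 x, x \in sq & all (le x) sq.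
  move=> /(_ (enum P)); case.
  - by apply/allP => y; rewrite mem_enum.
  - apply/eqP => h; have : x0 \in enum P by rewrite mem_enum.
    by rewrite h.
  move=> x; rewrite mem_enum => Px /allP h; exists x; apply/andP; split; first exact: Px.
  apply/forallP => y; apply/implyP => Py; apply: h; by rewrite mem_enum.
elim=> [|y sq IH] //= /andP [Py Psq] _.
case: sq IH Psq => [|z sq'] IH Psq.
  by exists y; rewrite ?inE ?refl.
have [x xin /allP hx] := IH Psq isT.
have Px : P x := allP Psq x xin.
case/orP: (tot y x) => hyx.
- exists y; first by rewrite inE eqxx.
  rewrite /= (refl y) /=; change (all (le y) (z :: sq')); apply/allP => w win.
  exact: (tr y x w Py Px (allP Psq w win) hyx (hx w win)).
- exists x; first by rewrite inE xin orbT.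
  rewrite /= hyx /=; change (all (le x) (z :: sq')); by apply/allP.
Qed.

Lemma nat_trans (a1 b1 a2 b2 a3 b3 : nat) : 0 < b2 ->
  a1 * b2 <= a2 * b1 -> a2 * b3 <= a3 * b2 -> a1 * b3 <= a3 * b1.
Proof. move=> *. nia. Qed.

Lemma div_mono (a b c d : nat) : 0 < b -> 0 < d -> a * d <= b * c -> a %/ b <= c %/ d.
Proof.
move=> hb hd h. rewrite leq_divRL //.
have := leq_trunc_div a b. move=> h2.
rewrite -(leq_pmul2l hb).
apply: leq_trans _ h. rewrite mulnA [b * _]mulnC. by rewrite leq_mul2r h2 orbT.
Qed.

Section Cls.
Variables (V F : finType) (E : rel V) (s : F -> V).

Lemma rtrans Vs (T U W : {set F}) : U != set0 ->
  ratio_le E s Vs T U -> ratio_le E s Vs U W -> ratio_le E s Vs T W.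
Proof. rewrite /ratio_le -card_gt0 => hU h1 h2. exact: nat_trans hU h1 h2. Qed.

Lemma MNS_spec Fr Vr : Fr != set0 -> is_MNS E s Fr Vr (MNS E s Fr Vr).
Proof.
move=> hFr. rewrite /MNS; case: pickP => [T hT | none] //=.
exfalso.
have [x0 hx0] : exists x0, x0 \in Fr by apply/set0Pn.
pose P := fun T : {set F} => (T \subset Fr) && (T != set0).
pose le := fun T U : {set F} => ratio_le E s Vr T U && (ratio_le E s Vr U T ==> (#|U| <= #|T|)).
have := @exists_min _ P le _ _ _ [set x0] _.
case.
- by move=> T; rewrite /le /ratio_le !leqnn.
- move=> T U; rewrite /le.
  case h1: (ratio_le E s Vr T U); case h2: (ratio_le E s Vr U T) => //=.
  + exact: leq_total.
  + have : ratio_le E s Vr T U || ratio_le E s Vr U T by exact: leq_total.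
    by rewrite h1 h2.
- move=> T U W /andP[_ hT] /andP[_ hU] /andP[_ hW] /andP[r1 i1] /andP[r2 i2].
  rewrite /le (rtrans hU r1 r2) /=. apply/implyP => r3.
  have r4 : ratio_le E s Vr U T := rtrans hW r2 r3.
  have r5 : ratio_le E s Vr W U := rtrans hT r3 r1.
  exact: leq_trans (implyP i2 r5) (implyP i1 r4).
- rewrite /P sub1set hx0 /=. apply/set0Pn; exists x0; by rewrite inE.
move=> T /andP [PT hT]; have := none T; rewrite /is_MNS.
case/andP: PT => -> -> /=. by rewrite hT.
Qed.

Lemma MNS_sub Fr Vr : Fr != set0 -> MNS E s Fr Vr \subset Fr.
Proof. by move/(MNS_spec Vr) => /and3P[]. Qed.

Lemma MNS_gt0 Fr Vr : Fr != set0 -> 0 < #|MNS E s Fr Vr|.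
Proof. by move/(MNS_spec Vr) => /and3P[_ h _]; rewrite card_gt0. Qed.

Lemma tail_LB (Fr : {set F}) (Vr : {set V}) (T : {set F}) : Fr != set0 ->
  T \subset Fr :\: MNS E s Fr Vr ->
  #|AsT E s (MNS E s Fr Vr) :&: Vr| * #|T| <=
  #|AsT E s T :&: (Vr :\: (AsT E s (MNS E s Fr Vr) :&: Vr))| * #|MNS E s Fr Vr|.
Proof.
move=> hFr hT.
have := MNS_spec Vr hFr.
set Fi := MNS E s Fr Vr; set Vi := AsT E s Fi :&: Vr.
rewrite /is_MNS => /and3P [hFi hFi0 /forallP /(_ (T :|: Fi))].
have hTFr : T \subset Fr by apply: subset_trans hT (subsetDl _ _).
rewrite subUset hTFr hFi /=.
have -> : (T :|: Fi != set0).
  move/set0Pn: hFi0 => [x hx]; apply/set0Pn; exists x; by rewrite inE hx orbT.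
move=> /andP [hr _]; move: hr; rewrite /ratio_le.
have disj : T :&: Fi = set0.
  apply/setP => x; rewrite !inE; apply/negbTE/negP => /andP[hx1 hx2].
  by have := subsetP hT x hx1; rewrite inE hx2.
rewrite cardsU disj cards0 subn0.
have eqA : AsT E s (T :|: Fi) :&: Vr = (AsT E s T :&: (Vr :\: Vi)) :|: Vi.
  apply/setP => x; rewrite /Vi /AsT bigcup_setU !inE.
  by case: (x \in \bigcup_(f in T) As E s f); case: (x \in \bigcup_(f in Fi) As E s f);
     case: (x \in Vr).
have disj2 : (AsT E s T :&: (Vr :\: Vi)) :&: Vi = set0.
  apply/setP => x; rewrite !inE; by case: (x \in AsT E s T); case: (x \in AsT E s Fi); case: (x \in Vr).
rewrite eqA cardsU disj2 cards0 subn0 -/Vi.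
move: #|Vi| #|T| #|Fi| #|AsT E s T :&: (Vr :\: Vi)| => a b c d h. nia.
Qed.

Lemma all_classes n (Fr : {set F}) (Vr : {set V}) (a b : nat) :
  (forall T : {set F}, T \subset Fr -> a * #|T| <= b * #|AsT E s T :&: Vr|) ->
  forall C, C \in classes_aux E s n Fr Vr -> a * #|C.1| <= b * #|C.2|.
Proof.
elim: n Fr Vr => [|n IH] Fr Vr hLB C //=.
case: eqP => [_|/eqP hFr] //.
rewrite inE => /orP [/eqP -> /= | hC].
  by apply: hLB; apply: MNS_sub.
apply: (IH _ _ _ C hC).
move=> T hT.
have h1 := tail_LB hFr hT.
have h2 := hLB _ (MNS_sub Vr hFr).
have h0 := MNS_gt0 Vr hFr.
move: h1 h2 h0.
set x := #|AsT E s T :&: _|.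
set vi := #|_ :&: Vr|. set fi := #|MNS E s Fr Vr|.
move=> h1 h2 h0.
move: x vi fi h1 h2 h0 => x vi fi h1 h2 h0.
move: #|T| h1 => t h1. nia.
Qed.


Lemma card_tail (Fr : {set F}) (Vr : {set V}) n : Fr != set0 -> #|Fr| <= n.+1 ->
  #|Fr :\: MNS E s Fr Vr| <= n.
Proof.
move=> hFr hn.
have h0 := MNS_gt0 Vr hFr.
rewrite cardsD (setIidPr (MNS_sub Vr hFr)).
move: h0 hn; move: #|Fr| #|MNS E s Fr Vr| => a b; lia.
Qed.

Lemma cover n (Fr : {set F}) (Vr : {set V}) f : #|Fr| <= n -> f \in Fr ->
  exists2 C, C \in classes_aux E s n Fr Vr & f \in C.1.
Proof.
elim: n Fr Vr => [|n IH] Fr Vr hn hf.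
  by move: hn; rewrite leqn0 => /eqP/cards0_eq h; rewrite h inE in hf.
have hFr : Fr != set0 by apply/set0Pn; exists f.
rewrite /= (negbTE hFr).
case: (boolP (f \in MNS E s Fr Vr)) => hfi.
  by exists (MNS E s Fr Vr, AsT E s (MNS E s Fr Vr) :&: Vr); rewrite ?inE ?eqxx.
have [|C hC hfC] := IH (Fr :\: MNS E s Fr Vr) (Vr :\: (AsT E s (MNS E s Fr Vr) :&: Vr)) (card_tail Vr hFr hn).
- by rewrite inE hfi.
by exists C; rewrite // inE hC orbT.
Qed.

Lemma ceil_floor (C : {set F} * {set V}) : class_ceil C <= (class_floor C).+1.
Proof. by rewrite /class_ceil /class_floor -addn1 leq_add2l leq_b1. Qed.

Lemma inAsT (T : {set F}) v f : f \in T -> f \in Ns E s v -> v \in AsT E s T.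
Proof. move=> hf hv; apply/bigcupP; exists f => //; by rewrite inE. Qed.

Lemma key n (Fr : {set F}) (Vr : {set V}) v f : #|Fr| <= n -> v \in Vr -> f \in Fr ->
  f \in Ns E s v -> exists C, exists C',
  [/\ C \in classes_aux E s n Fr Vr, C' \in classes_aux E s n Fr Vr, v \in C.2, f \in C'.1
    & class_ceil C <= (class_floor C').+1].
Proof.
elim: n Fr Vr => [|n IH] Fr Vr hn hv hf hN.
  by move: hn; rewrite leqn0 => /eqP/cards0_eq h; rewrite h inE in hf.
have hFr : Fr != set0 by apply/set0Pn; exists f.
rewrite /= (negbTE hFr).
set Fi := MNS E s Fr Vr; set Vi := AsT E s Fi :&: Vr.
have hct := card_tail Vr hFr hn.
case: (boolP (f \in Fi)) => hfi.
  exists (Fi, Vi), (Fi, Vi); split; rewrite ?inE ?eqxx //=.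
  - by rewrite (inAsT hfi hN) hv.
  - exact: ceil_floor.
case: (boolP (v \in Vi)) => hvi.
  have [|C' hC' hfC'] := cover (Vr :\: Vi) hct (_ : f \in Fr :\: Fi); first by rewrite inE hfi.
  exists (Fi, Vi), C'; split => //.
  - by rewrite inE eqxx.
  - by rewrite inE hC' orbT.
  apply: leq_trans (ceil_floor _) _; rewrite ltnS /class_floor /=.
  have hC'0 : 0 < #|C'.1| by rewrite card_gt0; apply/set0Pn; exists f.
  apply: div_mono => //; first exact: MNS_gt0.
  apply: (all_classes (a := #|Vi|) (b := #|Fi|) _ hC').
  by move=> T hT; rewrite [#|Fi| * _]mulnC; apply: tail_LB.
have [|||C [C' [hC hC' hvC hfC' hle]]] := IH (Fr :\: Fi) (Vr :\: Vi) hct.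
- by rewrite inE hvi.
- by rewrite inE hfi.
- exact: hN.
by exists C, C'; split; rewrite ?inE ?hC ?hC' ?orbT.
Qed.

End Cls.
From mathcomp Require Import lra.
Local Open Scope ring_scope.

Theorem mainTheorem9 (R : realFieldType) (V F : finType) (E : rel V)
  (s : F -> V) (sigma : V -> F -> R) :
  client_profile E s sigma ->
  rounded E s sigma ->
  client_equilibrium E s sigma.
Proof.
move=> hprof hround v d hd.
have costdev : cost E s (deviate sigma v d) v =
    1 + \sum_(f in Ns E s v) d f * load_minus sigma v f.
  rewrite /cost /load_minus /deviate eqxx; congr (1 + _); apply: eq_bigr => f _.
  congr (_ * _); apply: eq_bigr => u /negbTE -> //.
rewrite costdev.
case: (boolP (Ns E s v == set0)) => hN.
  by rewrite /cost (eqP hN) !big_set0 ltxx.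
have [f0 hf0] := set0Pn _ hN.
have [C [C' [hC _ hvC _ _]]] := key (n := #|F|) (Fr := setT) (Vr := setT) (max_card _)
   (in_setT v) (in_setT f0) hf0.
have [_ hr] := hround C hC; have [g [[hgC hg1] _]] := hr v hvC.
have [h01 [hout hsum]] := hprof v.
have hz : forall f, f != g -> sigma v f = 0.
  have h0 : \sum_(i | i != g) sigma v i = 0.
    have := hsum hN; rewrite (bigD1 g) //= hg1 => /(congr1 (fun x => x - 1)).
    by rewrite addrC addrK subrr.
  move=> f hfg; apply: (psumr_eq0P _ h0) => // i _; exact: (andP (h01 i)).1.
have lmg : load_minus sigma v g = load sigma g - 1.
  by rewrite /load (bigD1 v) //= hg1 /load_minus addrC addrK.
have lmf : forall f, f != g -> load_minus sigma v f = load sigma f.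
  by move=> f hfg; rewrite /load (bigD1 v) //= hz // add0r.
have hgN : g \in Ns E s v.
  by apply: contraT => h; have := hout g h; rewrite hg1 => /eqP; rewrite oner_eq0.
have costv : cost E s sigma v = load sigma g.
  rewrite /cost (bigD1 g) //= big1 ?addr0; last first.
    by move=> f /andP[_ hfg]; rewrite hz // mul0r.
  by rewrite hg1 mul1r lmg addrC subrK.
have lb : forall f, f \in Ns E s v -> load sigma g - 1 <= load_minus sigma v f.
  move=> f hf; case: (eqVneq f g) => [-> | hfg]; first by rewrite lmg.
  rewrite lmf //.
  have [C1 [C1' [hC1 hC1' hvC1 hfC1 hle]]] := key (n := #|F|) (Fr := setT) (Vr := setT)
     (max_card _) (in_setT v) (in_setT f) hf.
  have [hl1 hr1] := hround C1 hC1; have [g1 [[hg1C hg11] _]] := hr1 v hvC1.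
  have eg : g1 = g.
    apply/eqP; apply: contraT => hne; have := hz g1 hne; rewrite hg11 => /eqP.
    by rewrite oner_eq0.
  subst g1.
  have hLg : load sigma g <= (class_ceil C1)%:R.
    by case: (hl1 g hg1C) => ->; rewrite // ler_nat leq_addr.
  have [hl2 _] := hround C1' hC1'.
  have hLf : (class_floor C1')%:R <= load sigma f.
    by case: (hl2 f hfC1) => ->; rewrite // ler_nat leq_addr.
  have := hle; rewrite -(ler_nat R) -addn1 natrD => h. lra.
have [d01 [dout dsum]] := hd.
have sd : \sum_(f in Ns E s v) d f = 1.
  rewrite -(dsum hN) big_mkcond; apply: eq_bigr => f _.
  by case: ifP => // /negbT /dout ->.
have : \sum_(f in Ns E s v) d f * (load sigma g - 1) <=
       \sum_(f in Ns E s v) d f * load_minus sigma v f.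
  apply: ler_sum => f hf; apply: ler_wpM2l; [exact: (andP (d01 f)).1 | exact: lb].
rewrite -mulr_suml sd mul1r costv => h1 h2. lra.
Qed.
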